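(* If $G$ is a torsion abelian group containing elements $a$ and $b$ of distinct prime orders $p$ and $q$, then $\mathbb{P}(G)$ has exactly one element.
   Context: An abelian group is regarded as a $\mathbb{Z}$-module. For a $\mathbb{Z}$-module $M$ let $M^\circ=M\setminus\{0\}$; define $x\sim'y$ on $M^\circ$ if there exist $m\in M$ and $r,s\in\mathbb{Z}$ with $x=rm$, $y=sm$; let $\sim$ be the equivalence relation generated by $\sim'$; and let $\mathbb{P}(M)=M^\circ/\sim$. *)

(* Defs.v *)
(* abelian groups = Z-modules = zmodType. *)
From mathcomp Require Import all_boot all_order all_algebra.
From Stdlib Require Import Relation_Operators.
Set Implicit Arguments. Unset Strict Implicit. Unset Printing Implicit Defensive.
Import GRing.Theory.
Local Open Scope ring_scope.

Definition has_order (M : zmodType) (x : M) (n : nat) : Prop :=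
  (0 < n)%N /\ x *+ n = 0 /\ forall m : nat, (0 < m)%N -> x *+ m = 0 -> (n <= m)%N.

Definition torsion (M : zmodType) : Prop :=
  forall x : M, exists n : nat, (0 < n)%N /\ x *+ n = 0.

Definition sim' (M : zmodType) (x y : M) : Prop :=
  x != 0 /\ y != 0 /\ exists (m : M) (r s : int), x = m *~ r /\ y = m *~ s.

Definition sim (M : zmodType) : M -> M -> Prop := clos_refl_sym_trans M (@sim' M).

(* C is an element of P(M) = M° / ~ , i.e. the ~-class of some x in M° *)
Definition is_Pclass (M : zmodType) (C : M -> Prop) : Prop :=
  exists x : M, x != 0 /\ C = (fun y => y != 0 /\ sim x y).

(* Main.v *)
Require Import Defs.
From mathcomp Require Import all_boot all_order all_algebra.
From mathcomp Require Import ring.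
From Stdlib Require Import Relation_Operators FunctionalExtensionality PropExtensionality.
Local Open Scope ring_scope.
Import GRing.Theory.

Lemma cop_sim (G : zmodType) (c a : G) (r s : nat) :
  c != 0 -> a != 0 -> c *+ r = 0 -> a *+ s = 0 -> coprime r s -> sim' c a.
Proof.
move=> c0 a0 cr as0 co; do 2 (split; first by []).
have [u [v Huv]] := Bezoutz r s.
have H1 : u * r + v * s = 1.
  by rewrite Huv /gcdz /=; move/eqP: co => ->.
exists (c + a), (v * s), (u * r).
have cR : c *~ r = 0 by rewrite -pmulrn.
have aS : a *~ s = 0 by rewrite -pmulrn.
have cR' : forall k : int, c *~ (k * r) = 0.
  by move=> k; rewrite mulrC mulrzA cR mul0rz.
have aS' : forall k : int, a *~ (k * s) = 0.
  by move=> k; rewrite mulrC mulrzA aS mul0rz.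
split.
- rewrite mulrzDl aS' addr0.
  by rewrite -[X in X = _]mulr1z -H1 mulrzDr cR' add0r.
- rewrite mulrzDl cR' add0r.
  by rewrite -[X in X = _]mulr1z -H1 mulrzDr aS' addr0.
Qed.

Lemma ord_nz (G : zmodType) (a : G) p : prime p -> has_order a p -> a != 0.
Proof.
move=> pp [_ [_ H]]; apply/eqP=> a0.
have := H 1%N isT; rewrite a0 mulr1n => /(_ erefl).
by rewrite leqNgt prime_gt1.
Qed.

Arguments ord_nz {G a p}.
Arguments cop_sim {G c a r s}.

Lemma to_a (G : zmodType) (a b : G) (p q : nat) :
  torsion G -> prime p -> prime q -> p <> q ->
  has_order a p -> has_order b q -> forall x : G, x != 0 -> sim x a.
Proof.
move=> tor pp pq pneq ha hb x x0.
have a0 := ord_nz pp ha; have b0 := ord_nz pq hb.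
have ap : a *+ p = 0 by case: ha => _ [].
have bq : b *+ q = 0 by case: hb => _ [].
have cpq : coprime p q.
  rewrite prime_coprime // dvdn_prime2 //; exact/eqP.
have [n [n0 xn]] := tor x.
have [m cpm nE] := pfactor_coprime pp n0.
set e := logn p n in nE.
have [y0|y0] := eqVneq (x *+ (p ^ e)) 0.
- apply: rst_trans (rst_step _ _ _ _ (cop_sim b0 a0 bq ap _)).
  + apply: rst_step; apply: (cop_sim x0 b0 y0 bq); exact: coprimeXl.
  + by rewrite coprime_sym.
- apply: rst_trans (rst_step _ _ _ _ (@cop_sim _ _ _ m p y0 a0 _ ap _)).
  + apply: rst_step; do 2 (split; first by []).
    by exists x, 1, (p ^ e)%N; rewrite mulr1z pmulrn.
  + by rewrite -mulrnA mulnC -nE.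
  + by rewrite coprime_sym.
Qed.

Theorem theorem4p10 (G : zmodType) (a b : G) (p q : nat) :
  torsion G -> prime p -> prime q -> p <> q ->
  has_order a p -> has_order b q ->
  exists! C : G -> Prop, is_Pclass C.
Proof.
move=> tor pp pq pneq ha hb.
have a0 := ord_nz pp ha.
have K := @to_a G a b p q tor pp pq pneq ha hb.
exists (fun y => y != 0 /\ sim a y); split; first by exists a.
move=> C [x [x0 ->]].
apply: functional_extensionality => y; apply: propositional_extensionality.
split=> -[y0 H]; split=> //.
- apply: rst_trans H; exact: K.
- apply: rst_trans H; exact: rst_sym (K x x0).
Qed.
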